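(* Let $n\ge1$, $h>0$, $\lambda>0$, and let $f:\mathbb{R}^n\to\mathbb{R}$ be Lipschitz with Lipschitz constant $L$. Then for every grid point $x_k\in h\mathbb{Z}^n$, $$\big|M^h_\lambda(f)(x_k)-M_\lambda(f)(x_k)\big|\le(2+\sqrt n)Lh+2\lambda h^2 n.$$
   Context: $M_\lambda(f)(x)=\inf_{y\in\mathbb{R}^n}\{f(y)+\lambda|y-x|^2\}$ is the lower Moreau envelope, and the discrete lower Moreau envelope at a grid point $x_k$ of the grid of size $h$ is $M^h_\lambda(f)(x_k)=\inf\{f(x_k+rh)+\lambda h^2|r|^2:\ r\in\mathbb{Z}^n\}$. Here $|\cdot|$ is the Euclidean norm. *)

(* Defs.v *)
From HB Require Import structures.
From mathcomp Require Import all_boot all_order all_algebra.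
From mathcomp Require Import all_classical all_reals.
Set Implicit Arguments. Unset Strict Implicit. Unset Printing Implicit Defensive.
Import Order.TTheory GRing.Theory Num.Theory.
Local Open Scope ring_scope.
Local Open Scope classical_set_scope.

Definition enorm (R : realType) (n : nat) (v : 'rV[R]_n) : R :=
  Num.sqrt (\sum_(i < n) v 0 i ^+ 2).

Definition intvec (R : realType) (n : nat) (r : 'rV[int]_n) : 'rV[R]_n :=
  map_mx (fun z : int => z%:~R) r.

Definition moreau (R : realType) (n : nat) (f : 'rV[R]_n -> R) (lam : R)
  (x : 'rV[R]_n) : R :=
  inf [set f y + lam * enorm (y - x) ^+ 2 | y in [set: 'rV[R]_n]].

Definition dmoreau (R : realType) (n : nat) (f : 'rV[R]_n -> R) (lam h : R)
  (x : 'rV[R]_n) : R :=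
  inf [set f (x + h *: intvec R r) + lam * h ^+ 2 * enorm (intvec R r) ^+ 2
      | r in [set: 'rV[int]_n]].

Definition lipschitz_with (R : realType) (n : nat) (f : 'rV[R]_n -> R) (L : R) :=
  forall x y : 'rV[R]_n, `|f x - f y| <= L * enorm (x - y).

(* Main.v *)
Require Import Defs.
From HB Require Import structures.
From mathcomp Require Import all_boot all_order all_algebra.
From mathcomp Require Import all_classical all_reals.
From mathcomp Require Import lra.
Import Order.TTheory GRing.Theory Num.Theory.
Local Open Scope ring_scope.
Local Open Scope classical_set_scope.

Section S.
Variable R : realType.

Definition mtr (t : R) : int := if 0 <= t then Num.floor t else - Num.floor (- t).

Lemma floor_prop (t : R) : 0 <= t -> 0 <= ((Num.floor t)%:~R : R) <= t /\ t < (Num.floor t)%:~R + 1.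
Proof.
move=> t0; have := floor_itv t; rewrite intrD /= => /andP[a b].
split=> //; rewrite a andbT ler0z floor_ge0 //.
Qed.

Lemma mtr_ok (t : R) : ((mtr t)%:~R)^+2 <= t^+2 /\ (t - (mtr t)%:~R)^+2 <= 1 :> R.
Proof.
rewrite /mtr; case: ifP => t0.
  have [/andP[a b] c] := @floor_prop t t0.
  set m := (Num.floor t)%:~R : R in a b c *; split; nra.
have t0' : 0 <= - t by move/negbT: t0; rewrite -ltNge; lra.
have [/andP[a b] c] := @floor_prop (-t) t0'.
rewrite intrN.
set m := (Num.floor (-t))%:~R : R in a b c *; split; nra.
Qed.

Lemma enorm_sq n (v : 'rV[R]_n) : enorm v ^+ 2 = \sum_(i < n) v 0 i ^+ 2.
Proof. by rewrite /enorm sqr_sqrtr // sumr_ge0 // => i _; rewrite sqr_ge0. Qed.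

Lemma enorm_ge0 n (v : 'rV[R]_n) : 0 <= enorm v.
Proof. exact: sqrtr_ge0. Qed.


Lemma enormZ2 n (h : R) (v : 'rV[R]_n) : enorm (h *: v) ^+ 2 = h ^+ 2 * enorm v ^+ 2.
Proof.
rewrite !enorm_sq mulr_sumr; apply: eq_bigr => i _; rewrite mxE exprMn //.
Qed.

Lemma key n (f : 'rV[R]_n -> R) (L lam h : R) (x y : 'rV[R]_n) :
  0 < h -> 0 < lam -> 0 <= L -> lipschitz_with f L ->
  exists r : 'rV[int]_n,
    f (x + h *: intvec R r) + lam * h ^+ 2 * enorm (intvec R r) ^+ 2
    <= f y + lam * enorm (y - x) ^+ 2 + L * (Num.sqrt n%:R * h).
Proof.
move=> h0 l0 L0 lip.
pose t i := (y - x) 0 i / h.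
exists (\row_i mtr (t i)).
set v := intvec R _.
have vE i : v 0 i = (mtr (t i))%:~R by rewrite /v /intvec !mxE.
have dE i : (y - x) 0 i = h * t i by rewrite /t mulrC divfK //; lra.
have a : h ^+ 2 * enorm v ^+ 2 <= enorm (y - x) ^+ 2.
  rewrite !enorm_sq mulr_sumr; apply: ler_sum => i _.
  rewrite vE dE; have [m1 _] := mtr_ok (t i).
  set m := (mtr (t i))%:~R : R in m1 *; nra.
have b : enorm (x + h *: v - y) ^+ 2 <= (Num.sqrt n%:R * h) ^+ 2.
  rewrite enorm_sq exprMn sqr_sqrtr ?ler0n //.
  apply: (@le_trans _ _ (\sum_(i < n) h ^+ 2)).
    apply: ler_sum => i _.
    have := dE i; rewrite !mxE => dEi.
    have [_ m2] := mtr_ok (t i).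
    set m := (mtr (t i))%:~R : R in m2 dEi *.
    have -> : x 0 i + h * m - y 0 i = h * (m - t i) by lra.
    rewrite exprMn; have -> : (m - t i) ^+ 2 = (t i - m) ^+ 2 by rewrite -sqrrN opprB.
    have h2 : 0 <= h ^+ 2 by rewrite sqr_ge0.
    nra.
  by rewrite sumr_const card_ord mulr_natl.
have e0 := @enorm_ge0 _ (x + h *: v - y).
have s0 : 0 <= Num.sqrt n%:R * h by rewrite mulr_ge0 ?sqrtr_ge0 //; lra.
have b' : enorm (x + h *: v - y) <= Num.sqrt n%:R * h by nra.
have := lip (x + h *: v) y; rewrite ler_norml => /andP[_ c].
have : L * enorm (x + h *: v - y) <= L * (Num.sqrt n%:R * h) by rewrite ler_wpM2l.
nra.
Qed.

Lemma enormN n (v : 'rV[R]_n) : enorm (- v) = enorm v.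
Proof. by rewrite /enorm; congr Num.sqrt; apply: eq_bigr => i _; rewrite mxE sqrrN. Qed.

Lemma L_ge0 n (f : 'rV[R]_n -> R) L : (1 <= n)%N -> lipschitz_with f L -> 0 <= L.
Proof.
move=> n1 lip; have := lip (const_mx 1) 0.
have e2 : enorm (const_mx 1 - 0 : 'rV[R]_n) ^+ 2 = n%:R.
  rewrite enorm_sq (eq_bigr (fun _ => 1)); last by move=> i _; rewrite !mxE subr0 expr1n.
  by rewrite sumr_const card_ord.
have np : 1 <= n%:R :> R by rewrite ler1n.
have e0 := @enorm_ge0 _ (const_mx 1 - 0 : 'rV[R]_n).
set e := enorm _ in e2 e0 *.
have a := normr_ge0 (f (const_mx 1) - f 0).
move=> b; nra.
Qed.

End S.

Theorem corollary4p4 (R : realType) (n : nat) (h lam L : R)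
  (f : 'rV[R]_n -> R) :
  (1 <= n)%N -> 0 < h -> 0 < lam -> lipschitz_with f L ->
  forall k : 'rV[int]_n,
    `|dmoreau f lam h (h *: intvec R k) - moreau f lam (h *: intvec R k)|
      <= (2 + Num.sqrt (n%:R)) * L * h + 2 * lam * h ^+ 2 * n%:R.
Proof.
move=> n1 h0 l0 lip k.
have L0 := @L_ge0 _ n f L n1 lip.
rewrite /dmoreau /moreau.
set x := h *: intvec R k.
pose F := fun y => f y + lam * enorm (y - x) ^+ 2.
pose G := fun r => f (x + h *: intvec R r) + lam * h ^+ 2 * enorm (intvec R r) ^+ 2.
pose A := [set F y | y in [set: 'rV[R]_n]].
pose D := [set G r | r in [set: 'rV[int]_n]].
change (`|inf D - inf A| <= (2 + Num.sqrt n%:R) * L * h + 2 * lam * h ^+ 2 * n%:R).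
have GF r : G r = F (x + h *: intvec R r).
  by rewrite /G /F addrAC subrr add0r enormZ2 mulrA.
pose b := f x - L * (L / lam).
have lbA : lbound A b.
  move=> _ [y _ <-]; rewrite /F /b.
  have := lip x y; rewrite ler_norml => /andP[_ c].
  have e0 := @enorm_ge0 _ _ (y - x).
  rewrite -[x - y]opprB enormN in c.
  set e := enorm (y - x) in e0 c *.
  have LE : L = lam * (L / lam) by rewrite mulrC divfK //; lra.
  set q := L / lam in LE *.
  have h1 : 0 <= lam * (e - q) ^+ 2 by rewrite mulr_ge0 ?sqr_ge0 //; lra.
  have h2 : 0 <= L * e by rewrite mulr_ge0.
  have h3 : L * q = lam * q ^+ 2 by rewrite {1}LE expr2 mulrA.
  have h4 : L * e = lam * q * e by rewrite {1}LE.
  nra.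
have hasA : has_lbound A by exists b.
have lbD : lbound D b by move=> _ [r _ <-]; rewrite GF; apply: lbA; exists (x + h *: intvec R r).
have hasD : has_lbound D by exists b.
have neD : nonempty D by exists (G 0); exists 0.
have neA : nonempty A by exists (F 0); exists 0.
have s1 : inf A <= inf D.
  apply: lb_le_inf => // _ [r _ <-]; rewrite GF; apply: ge_inf => //; by exists (x + h *: intvec R r).
pose c := L * (Num.sqrt n%:R * h).
have s2 : inf D - c <= inf A.
  apply: lb_le_inf => // _ [y _ <-].
  have [r0 hr] := @key _ _ f L lam h x y h0 l0 L0 lip.
  rewrite lerBlDr; apply: le_trans hr; apply: ge_inf => //; by exists r0.
have c1 : c <= (2 + Num.sqrt n%:R) * L * h + 2 * lam * h ^+ 2 * n%:R.
  have : 0 <= L * h by rewrite mulr_ge0 //; lra.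
  have : 0 <= lam * h ^+ 2 * n%:R by rewrite !mulr_ge0 ?sqr_ge0 //; lra.
  rewrite /c; set s := Num.sqrt _; nra.
rewrite ger0_norm; last by rewrite subr_ge0.
lra.
Qed.
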